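(* Let $S,U$ be standard Borel, $\gamma\in(0,1)$, and consider two series-wired modules: module 1 with input state space $S$, output $U$, and module 2 with input $U$, output $S$, each with fixed policy, expected scalar one-step reward $r_i(x,a)$ and transition kernel $P^{(i)}(\cdot\mid x,a)$, inducing micro-step Bellman transformers $T_1:\mathcal{B}(U)\to\mathcal{B}(S)$, $T_2:\mathcal{B}(S)\to\mathcal{B}(U)$, $(T_iW)(x)=\int_A[r_i(x,a)+\gamma\int W\,dP^{(i)}(\cdot\mid x,a)]\pi_i(da\mid x)$; let $\widetilde T_i$ be defined likewise from perturbed $\tilde r_i,\widetilde P^{(i)}$ with the same policies. Assume all (original and perturbed) scalar rewards are bounded by $R_{\max}$, set $V_{\max}=R_{\max}/(1-\gamma)$, and assume $\sup_{x,a}|\tilde r_i(x,a)-r_i(x,a)|\le\varepsilon_r^{(i)}$ and $\sup_{x,a}d_{\mathrm{TV}}(\widetilde P^{(i)}(\cdot\mid x,a),P^{(i)}(\cdot\mid x,a))\le\varepsilon_P^{(i)}$. Let $\epsilon_i:=\varepsilon_r^{(i)}+\gamma V_{\max}\varepsilon_P^{(i)}$, and let $V^\pi,\widetilde V^\pi$ be the unique fixed points in $\mathcal{B}(S)$ of $T_1\circ T_2$ and $\widetilde T_1\circ\widetilde T_2$. Then \[\|\widetilde V^\pi-V^\pi\|_\infty\le\frac{\epsilon_1+\gamma\epsilon_2}{1-\gamma^2}.\]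
   Context: $\mathcal{B}(X)$ denotes bounded measurable real functions on $X$ with sup norm. $d_{\mathrm{TV}}(\mu,\nu):=\sup_{\|f\|_\infty\le1}|\int f\,d\mu-\int f\,d\nu|$. *)

(* Defs.v *)
From HB Require Import structures.
From mathcomp Require Import all_boot all_order all_algebra.
From mathcomp Require Import all_classical all_reals all_analysis.
Set Implicit Arguments. Unset Strict Implicit. Unset Printing Implicit Defensive.
Import Order.TTheory GRing.Theory Num.Theory.
Local Open Scope classical_set_scope.
Local Open Scope ring_scope.

Definition dTV (R : realType) (d : measure_display) (X : measurableType d)
  (mu nu : {measure set X -> \bar R}) : \bar R :=
  ereal_sup [set `| (\int[mu]_x (f x)%:E - \int[nu]_x (f x)%:E)%E |%E
            | f in [set f : X -> R | measurable_fun setT f /\ forall x, `|f x| <= 1]].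

Definition sup_norm (R : realType) (X : Type) (f : X -> R) : \bar R :=
  ereal_sup (range (fun x => (`|f x|)%:E)).

Definition bellman (R : realType) (dX dA dY : measure_display)
  (X : measurableType dX) (A : measurableType dA) (Y : measurableType dY)
  (pi : R.-pker X ~> A) (r : X -> A -> R) (P : R.-pker (X * A)%type ~> Y)
  (g : R) (W : Y -> R) : X -> R :=
  fun x => Rintegral (pi x) setT
             (fun a => r x a + g * Rintegral (P (x, a)) setT W).

Definition bounded_meas (R : realType) (d : measure_display) (X : measurableType d)
  (f : X -> R) : Prop :=
  measurable_fun setT f /\ exists M : R, forall x, `|f x| <= M.

(* Main.v *)
Require Import Defs.
From HB Require Import structures.
From mathcomp Require Import all_boot all_order all_algebra.
From mathcomp Require Import all_classical all_reals all_analysis.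
From mathcomp Require Import measurable_realfun lra ring.
Set Implicit Arguments. Unset Strict Implicit.
Import Order.TTheory GRing.Theory Num.Theory.
Local Open Scope classical_set_scope.
Local Open Scope ring_scope.

Section H.
Context (R : realType) d (Y : measurableType d).

Lemma int_bnd (mu : {measure set Y -> \bar R}) (mu1 : mu setT = 1%E) (f : Y -> R) (M : R) :
  measurable_fun setT f -> (forall y, `|f y| <= M) -> mu.-integrable setT (EFin \o f).
Proof.
move=> mf bf; apply: measurable_bounded_integrable => //.
  by rewrite mu1 ltry.
exists M; split; first exact: num_real.
move=> x Mx y _; apply: le_trans (bf y) _; exact: ltW.
Qed.

Lemma Rint_norm_le (mu : {measure set Y -> \bar R}) (mu1 : mu setT = 1%E) (f : Y -> R) (M : R) :
  measurable_fun setT f -> (forall y, `|f y| <= M) -> `|Rintegral mu setT f| <= M.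
Proof.
move=> mf bf.
have If := int_bnd mu1 mf bf.
apply: le_trans (le_normr_Rintegral _ _) _ => //.
have -> : M = Rintegral mu setT (fun _ => M).
  by rewrite Rintegral_cst // mu1 /= mulr1.
apply: le_Rintegral => //.
- exact: integrable_norm.
- apply: (@int_bnd mu mu1 (fun _ => M) `|M|) => //.
Qed.


Lemma RintE (mu : {measure set Y -> \bar R}) (f : Y -> R) :
  mu.-integrable setT (EFin \o f) ->
  (\int[mu]_x (f x)%:E)%E = (Rintegral mu setT f)%:E.
Proof. by move=> If; rewrite /Rintegral fineK //; exact: integrable_fin_num. Qed.

Lemma tv_bound (mu nu : {measure set Y -> \bar R}) (mu1 : mu setT = 1%E)
  (nu1 : nu setT = 1%E) (W : Y -> R) (M e : R) :
  measurable_fun setT W -> (forall y, `|W y| <= M) ->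
  (dTV mu nu <= e%:E)%E ->
  `|Rintegral mu setT W - Rintegral nu setT W| <= M * e.
Proof.
move=> mW bW he.
have [M0|M0] := leP M 0.
  have W0 : forall y, W y = 0.
    by move=> y; apply/normr0_eq0/eqP; rewrite eq_le normr_ge0 andbT (le_trans (bW y)).
  rewrite (_ : Rintegral mu setT W = Rintegral mu setT (fun _ => 0)); last first.
    by apply: eq_Rintegral => y _; rewrite W0.
  rewrite Rintegral_cst // mul0r.
  rewrite (_ : Rintegral nu setT W = Rintegral nu setT (fun _ => 0)); last first.
    by apply: eq_Rintegral => y _; rewrite W0.
  rewrite Rintegral_cst // mul0r.
  have y0 : exists y : Y, True.
    apply: contrapT => hn.
    have : mu setT = mu set0.
      by congr (mu _); apply/seteqP; split => y //= _; apply: hn; exists y.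
    by rewrite mu1 measure0 => -[] /eqP; rewrite oner_eq0.
  case: y0 => y _.
  have : M = 0 by apply/eqP; rewrite eq_le M0 (le_trans _ (bW y)).
  by move=> ->; rewrite subrr normr0 mul0r.
pose f := fun y => W y / M.
have mf : measurable_fun setT f by exact: (measurable_realfun.measurable_funM mW (measurable_cst _)).
have bf : forall y, `|f y| <= 1.
  by move=> y; rewrite /f normrM normfV (gtr0_norm M0) ler_pdivrMr // mul1r.
have Ifm := int_bnd mu1 mf bf.
have Ifn := int_bnd nu1 mf bf.
have IWm := int_bnd mu1 mW bW.
have IWn := int_bnd nu1 mW bW.
have : (`| (\int[mu]_x (f x)%:E - \int[nu]_x (f x)%:E)%E |%E <= e%:E)%E.
  apply: le_trans he; apply: ereal_sup_ubound; exists f => //.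
rewrite !RintE // -EFinB /= lee_fin.
rewrite /f !RintegralZr // -mulrBl normrM normfV (gtr0_norm M0) ler_pdivrMr //.
by rewrite mulrC.
Qed.

End H.

Lemma meas_int (R : realType) dX dA (X : measurableType dX) (A : measurableType dA)
  (pi : R.-pker X ~> A) (h : X * A -> R) (M : R) :
  measurable_fun setT h -> (forall z, `|h z| <= M) ->
  measurable_fun setT (fun x => Rintegral (pi x) setT (fun a => h (x, a))).
Proof.
move=> mh bh.
have mhx : forall x, measurable_fun setT (fun a => h (x, a)).
  by move=> x; exact: (measurableT_comp mh (pair1_measurable x)).
have pi1 : forall x, pi x setT = 1%E by move=> x; exact: prob_kernel.
have E : (fun x => Rintegral (pi x) setT (fun a => h (x, a))) =
   (fun x => fine (\int[pi x]_a ((h (x, a) + M)%:E))%E - M).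
  apply/funext => x.
  have -> : fine (\int[pi x]_a ((h (x, a) + M)%:E))%E =
            Rintegral (pi x) setT (fun a => h (x, a) + M) by [].
  rewrite RintegralD //.
  - by rewrite Rintegral_cst // pi1 mulr1 addrK.
  - exact: (int_bnd (pi1 x) (mhx x) (fun a => bh (x, a))).
  - apply: (@int_bnd _ _ _ _ (pi1 x) (fun _ => M) `|M|) => //.
have mk : measurable_fun [set: X * A] (fun z => (h z + M)%:E).
  apply/measurable_EFinP.
  exact: (measurable_realfun.measurable_funD mh (measurable_cst _)).
have k0 : forall z : X * A, (0 <= (h z + M)%:E)%E.
  move=> z; rewrite lee_fin -lerBlDr sub0r.
  by have := bh z; rewrite ler_norml => /andP[].
rewrite E.
apply: measurable_realfun.measurable_funB; last exact: measurable_cst.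
apply: measurableT_comp; first exact: fine_measurable.
exact: (measurable_fun_integral_finite_kernel _ pi k0 mk).
Qed.

Lemma fix_bound (R : realType) (X : Type) (f : X -> R) (c q : R) :
  0 <= q -> q < 1 -> (exists M, forall x, `|f x| <= M) ->
  (forall D, (forall x, `|f x| <= D) -> forall x, `|f x| <= c + q * D) ->
  (sup_norm f <= (c / (1 - q))%:E)%E.
Proof.
move=> q0 q1 [M hM] hD.
have ub : forall x, (`|f x|%:E <= sup_norm f)%E.
  by move=> x; apply: ereal_sup_ubound; exists x.
have sM : (sup_norm f <= M%:E)%E.
  by apply: ge_ereal_sup => _ [x _ <-]; rewrite lee_fin.
case E: (sup_norm f) ub sM => [r| |] ub sM //; last exact: leNye.
have hr : forall x, `|f x| <= r by move=> x; have := ub x; rewrite lee_fin.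
have : (sup_norm f <= (c + q * r)%:E)%E.
  by apply: ge_ereal_sup => _ [x _ <-]; rewrite lee_fin; exact: hD.
rewrite E lee_fin => h.
rewrite lee_fin ler_pdivlMr ?subr_gt0 //.
have : r * (1 - q) = r - q * r by rewrite mulrBr mulr1 mulrC.
move=> ->; lra.
Qed.

Section Bell.
Context (R : realType) (dX dA dY : measure_display) (X : measurableType dX)
  (A : measurableType dA) (Y : measurableType dY).
Variables (pi : R.-pker X ~> A) (g : R) (g0 : 0 <= g).

Lemma L1 (P : R.-pker (X * A)%type ~> Y) (W : Y -> R) (D : R) :
  measurable_fun setT W -> (forall y, `|W y| <= D) ->
  measurable_fun setT (fun xa => Rintegral (P xa) setT W).
Proof.
move=> mW bW.
apply: (@meas_int R _ _ _ _ P (fun p => W p.2) D) => //.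
exact: (measurableT_comp mW measurable_snd).
Qed.

Lemma L2 (r : X -> A -> R) (Rm : R) (P : R.-pker (X * A)%type ~> Y) (W : Y -> R) (D : R) :
  measurable_fun setT W -> (forall y, `|W y| <= D) ->
  (forall x a, `|r x a| <= Rm) ->
  forall x a, `|r x a + g * Rintegral (P (x, a)) setT W| <= Rm + g * D.
Proof.
move=> mW bW br x a.
apply: le_trans (ler_normD _ _) _; apply: lerD => //.
rewrite normrM (ger0_norm g0); apply: ler_wpM2l => //.
apply: Rint_norm_le => //; exact: prob_kernel.
Qed.

Lemma L3 (r : X -> A -> R) (Rm : R) (P : R.-pker (X * A)%type ~> Y) (W : Y -> R) (D : R) :
  measurable_fun setT (fun xa : X * A => r xa.1 xa.2) ->
  measurable_fun setT W -> (forall y, `|W y| <= D) ->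
  (forall x a, `|r x a| <= Rm) ->
  measurable_fun setT (bellman pi r P g W) /\ forall x, `|bellman pi r P g W x| <= Rm + g * D.
Proof.
move=> mr mW bW br.
have mh : measurable_fun setT
    (fun xa : X * A => r xa.1 xa.2 + g * Rintegral (P xa) setT W).
  apply: measurable_realfun.measurable_funD => //.
  apply: measurable_realfun.measurable_funM; first exact: measurable_cst.
  exact: L1 mW bW.
split.
  apply: (@meas_int R _ _ _ _ pi _ (Rm + g * D) mh).
  by move=> [x a] /=; exact: (L2 P mW bW br x a).
move=> x; rewrite /bellman.
apply: Rint_norm_le; first exact: prob_kernel.
  exact: (measurableT_comp mh (pair1_measurable x)).
by move=> a /=; exact: (L2 P mW bW br x a).
Qed.

Lemma L5 (r rt : X -> A -> R) (Rm er eP E D : R) (P Pt : R.-pker (X * A)%type ~> Y)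
  (W Wt : Y -> R) :
  measurable_fun setT (fun xa : X * A => r xa.1 xa.2) ->
  measurable_fun setT (fun xa : X * A => rt xa.1 xa.2) ->
  measurable_fun setT W -> (forall y, `|W y| <= D) ->
  measurable_fun setT Wt -> (forall y, `|Wt y| <= D) ->
  (forall y, `|Wt y - W y| <= E) ->
  (forall x a, `|r x a| <= Rm) -> (forall x a, `|rt x a| <= Rm) ->
  (forall x a, `|rt x a - r x a| <= er) ->
  (forall x a, (dTV (Pt (x, a)) (P (x, a)) <= eP%:E)%E) ->
  forall x, `|bellman pi rt Pt g Wt x - bellman pi r P g W x| <= er + g * (D * eP + E).
Proof.
move=> mr mrt mW bW mWt bWt bE br brt her heP x.
have mh : forall (r : X -> A -> R) (P : R.-pker (X * A)%type ~> Y) (W : Y -> R),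
    measurable_fun setT (fun xa : X * A => r xa.1 xa.2) ->
    measurable_fun setT W -> (forall y, `|W y| <= D) ->
    measurable_fun setT (fun a => r x a + g * Rintegral (P (x, a)) setT W).
  move=> r0 P0 W0 mr0 mW0 bW0.
  have J : measurable_fun setT
      (fun xa : X * A => r0 xa.1 xa.2 + g * Rintegral (P0 xa) setT W0).
    apply: measurable_realfun.measurable_funD => //.
    apply: measurable_realfun.measurable_funM; first exact: measurable_cst.
    exact: L1 mW0 bW0.
  exact: (measurableT_comp J (pair1_measurable x)).
have px : pi x setT = 1%E by exact: prob_kernel.
have I1 := int_bnd px (mh r P W mr mW bW) (L2 P mW bW br x).
have I2 := int_bnd px (mh rt Pt Wt mrt mWt bWt) (L2 Pt mWt bWt brt x).
rewrite /bellman -RintegralB //.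
apply: Rint_norm_le => //.
  exact: measurable_realfun.measurable_funB (mh rt Pt Wt mrt mWt bWt) (mh r P W mr mW bW).
move=> a.
have pxa : forall (Q : R.-pker (X * A)%type ~> Y), Q (x, a) setT = 1%E.
  by move=> Q; exact: prob_kernel.
rewrite (_ : _ - _ = (rt x a - r x a) + g * ((Rintegral (Pt (x, a)) setT Wt -
   Rintegral (P (x, a)) setT Wt) + (Rintegral (P (x, a)) setT Wt - Rintegral (P (x, a)) setT W))); last first.
  by ring.
apply: le_trans (ler_normD _ _) _; apply: lerD => //.
rewrite normrM (ger0_norm g0); apply: ler_wpM2l => //.
apply: le_trans (ler_normD _ _) _; apply: lerD.
  have := tv_bound (pxa Pt) (pxa P) mWt bWt (heP x a). exact.
have I3 := int_bnd (pxa P) mWt bWt.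
have I4 := int_bnd (pxa P) mW bW.
rewrite -RintegralB //.
apply: Rint_norm_le => //; exact: measurable_realfun.measurable_funB.
Qed.

End Bell.

Unset Implicit Arguments. Set Strict Implicit.

Theorem lemma16 (R : realType)
  (dS dU dA1 dA2 : measure_display)
  (S : measurableType dS) (U : measurableType dU)
  (A1 : measurableType dA1) (A2 : measurableType dA2)
  (g : R) (hg0 : 0 < g) (hg1 : g < 1)
  (pi1 : R.-pker S ~> A1) (pi2 : R.-pker U ~> A2)
  (r1 rt1 : S -> A1 -> R) (r2 rt2 : U -> A2 -> R)
  (P1 Pt1 : R.-pker (S * A1)%type ~> U) (P2 Pt2 : R.-pker (U * A2)%type ~> S)
  (Rmax epsr1 epsr2 epsP1 epsP2 : R)
  (mr1 : measurable_fun setT (fun xa : S * A1 => r1 xa.1 xa.2))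
  (mrt1 : measurable_fun setT (fun xa : S * A1 => rt1 xa.1 xa.2))
  (mr2 : measurable_fun setT (fun xa : U * A2 => r2 xa.1 xa.2))
  (mrt2 : measurable_fun setT (fun xa : U * A2 => rt2 xa.1 xa.2))
  (br1 : forall x a, `|r1 x a| <= Rmax) (brt1 : forall x a, `|rt1 x a| <= Rmax)
  (br2 : forall x a, `|r2 x a| <= Rmax) (brt2 : forall x a, `|rt2 x a| <= Rmax)
  (her1 : forall x a, `|rt1 x a - r1 x a| <= epsr1)
  (her2 : forall x a, `|rt2 x a - r2 x a| <= epsr2)
  (heP1 : forall x a, (dTV (Pt1 (x, a)) (P1 (x, a)) <= epsP1%:E)%E)
  (heP2 : forall x a, (dTV (Pt2 (x, a)) (P2 (x, a)) <= epsP2%:E)%E)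
  (V Vt : S -> R)
  (hV : bounded_meas V)
  (hVfix : forall x, V x = bellman pi1 r1 P1 g (bellman pi2 r2 P2 g V) x)
  (hVt : bounded_meas Vt)
  (hVtfix : forall x, Vt x = bellman pi1 rt1 Pt1 g (bellman pi2 rt2 Pt2 g Vt) x) :
  let Vmax := Rmax / (1 - g) in
  let eps1 := epsr1 + g * Vmax * epsP1 in
  let eps2 := epsr2 + g * Vmax * epsP2 in
  (sup_norm (fun x => (Vt x - V x)%R) <= ((eps1 + g * eps2) / (1 - g ^+ 2))%:E)%E.

Proof.
pose Vmax := Rmax / (1 - g).
pose eps1 := epsr1 + g * Vmax * epsP1.
pose eps2 := epsr2 + g * Vmax * epsP2.
change (sup_norm (fun x => (Vt x - V x)%R) <= ((eps1 + g * eps2) / (1 - g ^+ 2))%:E)%E.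
have g0 : 0 <= g := ltW hg0.
have g1' : 0 < 1 - g by rewrite subr_gt0.
have eqle : forall x y : R, x = y -> x <= y by move=> x y ->.
have hVm : Rmax + g * Vmax = Vmax.
  by rewrite /Vmax; field; exact: lt0r_neq0.
have hq0 : 0 <= g ^+ 2 by rewrite exprn_ge0.
have hq1 : g ^+ 2 < 1 by rewrite expr_lt1.
have [mVt [Mt bMt]] := hVt.
have [mV [M bM]] := hV.
have gen : forall (q1 : S -> A1 -> R) (q2 : U -> A2 -> R)
    (Q1 : R.-pker (S * A1)%type ~> U) (Q2 : R.-pker (U * A2)%type ~> S) (F : S -> R) (MF : R),
    measurable_fun setT (fun xa : S * A1 => q1 xa.1 xa.2) ->
    measurable_fun setT (fun xa : U * A2 => q2 xa.1 xa.2) ->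
    (forall x a, `|q1 x a| <= Rmax) -> (forall x a, `|q2 x a| <= Rmax) ->
    measurable_fun setT F -> (forall x, `|F x| <= MF) ->
    (forall x, F x = bellman pi1 q1 Q1 g (bellman pi2 q2 Q2 g F) x) ->
    forall x, `|F x| <= Vmax.
  move=> q1 q2 Q1 Q2 F MF mq1 mq2 bq1 bq2 mF bF hF.
  have sb := @fix_bound R S F (Rmax + g * Rmax) (g ^+ 2) hq0 hq1 (ex_intro _ MF bF).
  have sb' : (sup_norm F <= ((Rmax + g * Rmax) / (1 - g ^+ 2))%:E)%E.
    apply: sb => D bD x; rewrite hF.
    have [mW bW] := L3 pi2 g0 Q2 mq2 mF bD bq2.
    have [_ b] := L3 pi1 g0 Q1 mq1 mW bW bq1.
    apply: le_trans (b x) _; apply: eqle; ring.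
  have eV : (Rmax + g * Rmax) / (1 - g ^+ 2) = Vmax.
    have n1 : 1 - g != 0 by exact: lt0r_neq0.
    have n2 : 1 - g ^+ 2 != 0 by apply: lt0r_neq0; rewrite subr_gt0.
    have n3 : 1 + g != 0 by apply: lt0r_neq0; rewrite ltr_pwDr.
    by rewrite /Vmax; field; rewrite n1 n2.
  rewrite eV in sb'.
  move=> x; rewrite -lee_fin; apply: le_trans sb'.
  by apply: ereal_sup_ubound; exists x.
have bVt := gen _ _ _ _ _ _ mrt1 mrt2 brt1 brt2 mVt bMt hVtfix.
have bV := gen _ _ _ _ _ _ mr1 mr2 br1 br2 mV bM hVfix.
apply: (@fix_bound R S (fun x => Vt x - V x) (eps1 + g * eps2) (g ^+ 2) hq0 hq1).
  exists (Mt + M) => x; apply: le_trans (ler_normB _ _) _; exact: lerD.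
move=> D bD x.
have [mWt bWt] := L3 pi2 g0 Pt2 mrt2 mVt bVt brt2.
have [mW bW] := L3 pi2 g0 P2 mr2 mV bV br2.
have bWD := L5 pi2 g0 mr2 mrt2 mV bV mVt bVt bD br2 brt2 her2 heP2.
rewrite hVtfix hVfix.
apply: le_trans (L5 pi1 g0 mr1 mrt1 mW bW mWt bWt bWD br1 brt1 her1 heP1 x) _.
rewrite hVm; apply: eqle; rewrite /eps1 /eps2; ring.
Qed.
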